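(* Let $m\ge 2$ and let $n_1,\dots,n_m\ge 4$ be even integers. Then the partition dimension of the even chain cycle $\mathcal{C}(C_{n_1},\dots,C_{n_m})$ equals $3$.
   Context: Let $C_{n_1},\dots,C_{n_m}$ be pairwise disjoint cycles, $V(C_{n_i})=\{v^i_1,\dots,v^i_{n_i}\}$ with $v^i_j$ adjacent to $v^i_{j+1}$ (indices mod $n_i$). The even chain cycle $\mathcal{C}(C_{n_1},\dots,C_{n_m})$ (all $n_i$ even) is obtained from the disjoint union of these cycles by identifying $v^i_{n_i/2+1}$ with $v^{i+1}_1$ for each $i=1,\dots,m-1$. For an ordered partition $\Pi=\{Q_1,\dots,Q_k\}$ of $V(G)$, $r(v\mid\Pi)=(d(v,Q_1),\dots,d(v,Q_k))$ where $d(v,Q)=\min_{q\in Q}d(v,q)$; $\Pi$ is resolving if distinct vertices have distinct representations; the partition dimension $pd(G)$ is the minimum $k$ for which a resolving $k$-partition exists. *)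

(* Defs.v *)
From mathcomp Require Import all_boot.
Set Implicit Arguments. Unset Strict Implicit. Unset Printing Implicit Defensive.

Section GraphNotions.
Variables (T : finType) (e : rel T).

Fixpoint walkb (k : nat) (u v : T) : bool :=
  if k is k'.+1 then [exists w, e u w && walkb k' w v] else u == v.

(* graph distance: least k with a walk of length k (graphs considered here are
   connected, so some k < #|T| works) *)
Definition gdist (u v : T) : nat := find (fun k => walkb k u v) (iota 0 #|T|).

(* An ordered k-partition Pi = {Q_0,...,Q_{k-1}} is encoded by the class map
   f : T -> 'I_k, Q_j = f^-1(j).  d(v, Q_j) = min_{q in Q_j} d(v,q). *)
Definition dist_class k (f : {ffun T -> 'I_k}) (j : 'I_k) (v : T) : nat :=
  \big[minn/#|T|]_(q | f q == j) gdist v q.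

Definition resolving_partition k (f : {ffun T -> 'I_k}) : bool :=
  [forall j : 'I_k, exists q, f q == j] &&
  [forall u, forall v, (u != v) ==> [exists j, dist_class f j u != dist_class f j v]].

(* partition dimension: least k admitting a resolving k-partition
   (the partition into singletons is resolving, so k <= #|T| exists) *)
Definition pdim : nat :=
  find (fun k => [exists f : {ffun T -> 'I_k}, resolving_partition f]) (iota 0 #|T|.+1).

End GraphNotions.

(* Cycles are indexed 0..m-1 with lengths n 0, ..., n (m-1).  Before gluing, the
   disjoint union is numbered 'I_M, M = sum n_i: vertex v^i_{j+1} (0-based j < n i)
   of cycle i is the number off i + j. *)
Section ChainCycle.
Variables (m : nat) (n : nat -> nat).

Definition off (i : nat) : nat := sumn [seq n k | k <- iota 0 i].
Definition rawM : nat := off m.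

Definition raw_adj (p q : nat) : bool :=
  [exists i : 'I_m,
    [&& off i <= p < off i + n i, off i <= q < off i + n i &
        ((p - off i).+1 %% n i == q - off i) || ((q - off i).+1 %% n i == p - off i)]].

(* gluing: v^{i+1}_1 (raw off (i+1)) is identified with v^i_{n_i/2+1}
   (raw off i + n_i/2), for i = 0..m-2; canon picks the latter as representative *)
Definition canon (p : nat) : nat :=
  if [seq i <- iota 0 m.-1 | p == off i.+1] is i :: _ then off i + (n i)./2 else p.

Definition chain_vertex := {p : 'I_rawM | canon p == p}.

Definition chain_adj : rel chain_vertex := fun u v =>
  [exists p : 'I_rawM, exists q : 'I_rawM,
     [&& canon p == val (val u), canon q == val (val v) & raw_adj p q]].

End ChainCycle.

(* Main.v *)
Require Import Defs.
From mathcomp Require Import all_boot zify.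

Set Implicit Arguments. Unset Strict Implicit. Unset Printing Implicit Defensive.

Lemma find_iota_le (a : pred nat) N k : a k -> k < N -> find a (iota 0 N) <= k.
Proof.
move=> ak kN; rewrite leqNgt; apply/negP => H.
have := before_find 0 H; rewrite nth_iota // add0n ak //.
Qed.

Lemma find_iota_true (a : pred nat) N : find a (iota 0 N) < N -> a (find a (iota 0 N)).
Proof.
move=> H; have hs : has a (iota 0 N) by rewrite has_find size_iota.
by have := nth_find 0 hs; rewrite nth_iota ?add0n // -{2}(size_iota 0 N) -has_find.
Qed.

Lemma find_iota_eq (a : pred nat) N k : k < N -> a k -> (forall l, l < k -> ~~ a l) ->
  find a (iota 0 N) = k.
Proof.
move=> kN ak H; apply/eqP; rewrite eqn_leq find_iota_le //=.
rewrite leqNgt; apply/negP => lt.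
have := find_iota_true (leq_trans lt (ltnW kN)) => h.
by have := H _ lt; rewrite h.
Qed.

Section G.
Variables (T : finType) (e : rel T).

Lemma card_pos (v : T) : 0 < #|T|.
Proof. by apply/card_gt0P; exists v. Qed.

Lemma gdist_le u v : gdist e u v <= #|T|.
Proof. by rewrite /gdist -{2}(size_iota 0 #|T|) find_size. Qed.

Lemma gdist_walk u v : gdist e u v < #|T| -> walkb e (gdist e u v) u v.
Proof. move=> H; exact: (find_iota_true H). Qed.

Lemma gdist_bound k u v : walkb e k u v -> gdist e u v <= k.
Proof.
move=> H; case: (ltnP k #|T|) => kN; first exact: find_iota_le.
exact: leq_trans (gdist_le u v) kN.
Qed.

Lemma gdist0 u v : (gdist e u v == 0) = (u == v).
Proof.
apply/eqP/eqP => [H|->].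
  have := gdist_walk (u:=u) (v:=v); rewrite H /= => h; apply/eqP/h; exact: card_pos u.
by apply/eqP; rewrite -leqn0; apply: gdist_bound => /=.
Qed.

Lemma gdist_adj u w q : e u w -> gdist e u q <= (gdist e w q).+1.
Proof.
move=> uw; case: (ltnP (gdist e w q) #|T|) => H.
  apply: gdist_bound => /=; apply/existsP; exists w; rewrite uw /=; exact: gdist_walk.
exact: leq_trans (gdist_le _ _) (leqW H).
Qed.

Lemma gdist_edge u v : e u v -> gdist e u v <= 1.
Proof. move=> uv; apply: gdist_bound => /=; apply/existsP; exists v; by rewrite uv /=. Qed.

Lemma bigmin_le_seq (s : seq T) N (P : pred T) (F : T -> nat) q :
  q \in s -> P q -> \big[minn/N]_(i <- s | P i) F i <= F q.
Proof.
elim: s => // x s IH; rewrite in_cons big_cons => /orP [/eqP <- -> | qs Pq].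
  exact: geq_minl.
case: ifP => _; last exact: IH.
exact: leq_trans (geq_minr _ _) (IH qs Pq).
Qed.

Variable k : nat.
Implicit Types (f : {ffun T -> 'I_k}) (j : 'I_k).

Lemma dc_le f j v q : f q = j -> dist_class e f j v <= gdist e v q.
Proof.
move=> fq; rewrite /dist_class; apply: (@bigmin_le_seq _ _ _ (fun q => gdist e v q)).
  by rewrite mem_index_enum.
by rewrite fq.
Qed.

Lemma dc_leN f j v : dist_class e f j v <= #|T|.
Proof.
apply: (big_ind (fun x => x <= #|T|)) => //.
  move=> x y hx hy; exact: leq_trans (geq_minl _ _) hx.
move=> q _; exact: gdist_le.
Qed.

Lemma dc_cases f j v : dist_class e f j v = #|T| \/
  exists2 q, f q = j & dist_class e f j v = gdist e v q.
Proof.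
rewrite /dist_class.
apply: (big_ind (fun x => x = #|T| \/ exists2 q, f q = j & x = gdist e v q)).
- by left.
- move=> x y hx hy; rewrite /minn; by case: ifP.
- move=> q /eqP fq; right; by exists q.
Qed.

Lemma dc0 f j v : (dist_class e f j v == 0) = (f v == j).
Proof.
apply/eqP/eqP => [H|H].
  case: (dc_cases f j v) => [h|[q fq h]].
    by have := card_pos v; rewrite -h H.
  by move: h; rewrite H => /esym/eqP; rewrite gdist0 => /eqP ->.
apply/eqP; rewrite -leqn0; apply: leq_trans (dc_le v H) _.
by rewrite leqn0 gdist0.
Qed.

Lemma dc_lip f j u w : e u w -> dist_class e f j u <= (dist_class e f j w).+1.
Proof.
move=> uw; case: (dc_cases f j w) => [->|[q fq ->]].
  exact: leq_trans (dc_leN _ _ _) (leqnSn _).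
exact: leq_trans (dc_le u fq) (gdist_adj q uw).
Qed.

Lemma dc_edge f j u w : e u w -> f w = j -> dist_class e f j u <= 1.
Proof. move=> uw fw; exact: leq_trans (dc_le u fw) (gdist_edge uw). Qed.

End G.

Set Implicit Arguments. Unset Strict Implicit. Unset Printing Implicit Defensive.

Section G2.
Variables (T : finType) (e : rel T).

Lemma gdist_phi (x : T) (phi : T -> nat) :
  (forall v, (phi v == 0) = (v == x)) ->
  (forall u v, e u v -> phi u <= (phi v).+1) ->
  (forall v, 0 < phi v -> exists u, e v u /\ (phi u).+1 = phi v) ->
  forall v, gdist e v x = phi v.
Proof.
move=> H0 Hl Hd.
have lb : forall k v, walkb e k v x -> phi v <= k.
  elim=> [|k IH] v /=; first by move=> /eqP ->; rewrite leqn0 H0.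
  case/existsP=> w /andP [vw wk]; have := Hl _ _ vw; have := IH _ wk; lia.
have ub : forall k v, phi v = k -> walkb e k v x.
  elim=> [|k IH] v /=; first by move=> /eqP; rewrite H0.
  move=> hv; have [|u [vu hu]] := Hd v; first by rewrite hv.
  apply/existsP; exists u; rewrite vu /=; apply: IH; by move: hu; rewrite hv => [[]].
have ex : forall p v, phi v = p -> forall k, k <= p -> exists u, phi u = k.
  elim=> [|p IH] v hv k hk; first by exists v; move: hk; rewrite leqn0 hv => /eqP ->.
  case: (ltnP k p.+1) => hk'.
    have [|u [vu hu]] := Hd v; first by rewrite hv.
    apply: (IH u); [by move: hu; rewrite hv => [[]] | by rewrite -ltnS].
  by exists v; apply/eqP; rewrite hv eqn_leq hk' hk.
move=> v.
have card : phi v < #|T|.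
  have := @uniq_leq_size _ (iota 0 (phi v).+1) (map phi (enum T)) (iota_uniq _ _).
  rewrite size_iota size_map -cardT; apply => k; rewrite mem_iota add0n => /andP [_ hk].
  have [u hu] := ex _ v erefl k hk; rewrite -hu; apply: map_f; by rewrite mem_enum.
apply/eqP; rewrite eqn_leq; have h1 : gdist e v x <= phi v by apply: gdist_bound; exact: ub.
by rewrite h1 /=; apply: lb; apply: gdist_walk; exact: leq_ltn_trans h1 card.
Qed.

Definition i1 : 'I_2 := @Ordinal 2 1 isT.

Lemma ord2 (i : 'I_2) : i = ord0 \/ i = i1.
Proof. case: i => [[|[|i]] Hi]; [left|right|by []]; exact: val_inj. Qed.

Lemma res_forall k (f : {ffun T -> 'I_k}) : resolving_partition e f ->
  forall u v, u != v -> exists j, dist_class e f j u != dist_class e f j v.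
Proof.
case/andP=> _ /forallP H u v uv; have := H u => /forallP /(_ v) /implyP /(_ uv) /existsP.
by [].
Qed.

Lemma no_res0 (v : T) (f : {ffun T -> 'I_0}) : False.
Proof. by case: (f v). Qed.

Lemma no_res1 (u v : T) (f : {ffun T -> 'I_1}) : u != v -> ~~ resolving_partition e f.
Proof.
move=> uv; apply/negP => /res_forall /(_ u v uv) [j].
have -> : dist_class e f j u = 0 by apply/eqP; rewrite dc0 (ord1 (f u)) (ord1 j).
have -> : dist_class e f j v = 0 by apply/eqP; rewrite dc0 (ord1 (f v)) (ord1 j).
by [].
Qed.

Lemma no_res2 (w a b c d : T) (f : {ffun T -> 'I_2}) :
  (forall x, x \in [:: a; b; c; d] -> [/\ e w x, e x w & x != w]) ->
  uniq [:: a; b; c; d] -> ~~ resolving_partition e f.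
Proof.
move=> Hn Hu; apply/negP => /res_forall H.
pose s x := dist_class e f ord0 x + dist_class e f i1 x.
have form : forall j x, dist_class e f j x = if f x == j then 0 else s x.
  move=> j x; case: ifP => [/eqP fx|fx]; first by apply/eqP; rewrite dc0 fx.
  rewrite /s; have z : dist_class e f (f x) x = 0 by apply/eqP; rewrite dc0.
  case: (ord2 j) fx => ->; case: (ord2 (f x)) z => -> z //; by rewrite z ?addn0.
have inj : forall x y, x != y -> f x = f y -> s x != s y.
  move=> x y xy fxy; have [j] := H x y xy; rewrite !form fxy.
  by case: ifP => //; apply: contra => /eqP ->.
move cwE: (f w) => cw.
have other : exists j', j' != cw.
  case: (ord2 cw) => ->; [by exists i1 | by exists ord0].
have [j' jc] := other.
pose g x := if f x == cw then nat_of_bool (s x < s w) else 2.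
have nb : forall x, x \in [:: a; b; c; d] ->
   (f x = cw -> (s x = (s w).+1 \/ (s x).+1 = s w)) /\ (f x != cw -> s x = 1).
  move=> x /Hn [wx xw xnw]; split => fx.
    have e1 := dc_lip f j' wx; have e2 := dc_lip f j' xw.
    move: e1 e2; rewrite !form fx cwE eq_sym (negbTE jc) => e1 e2.
    have := inj x w xnw (etrans fx (esym cwE)); lia.
  have e1 := dc_edge xw cwE; have := dc0 e f cw x; rewrite (negbTE fx).
  rewrite form (negbTE fx); move: e1; rewrite form (negbTE fx); lia.
have gneq : forall x y, x \in [:: a; b; c; d] -> y \in [:: a; b; c; d] -> x != y -> g x != g y.
  move=> x y hx hy xy; have [nx1 nx2] := nb x hx; have [ny1 ny2] := nb y hy.
  rewrite /g; case: (eqVneq (f x) cw) => fx; case: (eqVneq (f y) cw) => fy /=.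
  - have := inj x y xy (etrans fx (esym fy)); have := nx1 fx; have := ny1 fy.
    case: (ltnP (s x) (s w)); case: (ltnP (s y) (s w)) => //=; lia.
  - by case: (_ < _).
  - by case: (_ < _).
  - have fxy : f x = f y.
      case: (ord2 (f x)) fx => ->; case: (ord2 (f y)) fy => -> //;
      case: (ord2 cw) => -> //.
    have := inj x y xy fxy; rewrite nx2 // ny2 //.
have gle : forall x, g x <= 2 by move=> x; rewrite /g; case: ifP => //; case: (_ < _).
move: Hu => /=; rewrite !inE !negb_or => /and4P [/and3P [ab ac ad] /andP [bc bd] cd _].
have := gneq a b; have := gneq a c; have := gneq a d; have := gneq b c;
have := gneq b d; have := gneq c d; rewrite !inE !eqxx !orbT.
move=> /(_ isT isT cd) h1 /(_ isT isT bd) h2 /(_ isT isT bc) h3 /(_ isT isT ad) h4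
  /(_ isT isT ac) h5 /(_ isT isT ab) h6.
have := gle a; have := gle b; have := gle c; have := gle d; lia.
Qed.

End G2.

Set Implicit Arguments. Unset Strict Implicit. Unset Printing Implicit Defensive.

Section C.
Variables (m : nat) (n : nat -> nat).
Hypothesis Hm : 2 <= m.
Hypothesis Hn : forall i, i < m -> 4 <= n i /\ ~~ odd (n i).

Lemma n4 i : i < m -> 4 <= n i. Proof. by case/Hn. Qed.
Lemma nev i : i < m -> ~~ odd (n i). Proof. by case/Hn. Qed.

Notation off := (off n).
Notation canon := (canon m n).
Notation rawM := (rawM m n).

Lemma off0 : off 0 = 0. Proof. by []. Qed.
Lemma offS i : off i.+1 = off i + n i.
Proof. by rewrite /Defs.off -addn1 iotaD map_cat sumn_cat /= addn0. Qed.
Lemma off_mono i i' : i <= i' -> off i <= off i'.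
Proof.
move=> /subnK <-; elim: (i' - i) => [|k IH] //; rewrite addSn offS.
exact: leq_trans IH (leq_addr _ _).
Qed.

Definition doff i := sumn [seq (n k)./2 | k <- iota 0 i].
Lemma doffS i : doff i.+1 = doff i + (n i)./2.
Proof. by rewrite /doff -addn1 iotaD map_cat sumn_cat /= addn0. Qed.
Lemma doff_mono i i' : i <= i' -> doff i <= doff i'.
Proof.
move=> /subnK <-; elim: (i' - i) => [|k IH] //; rewrite addSn doffS.
exact: leq_trans IH (leq_addr _ _).
Qed.

Lemma rawM_ge : n 0 <= rawM.
Proof.
have := off_mono (_ : 1 <= m); rewrite offS off0 add0n; apply; lia.
Qed.

Lemma decompM M p : p < off M -> exists i j, [/\ i < M, j < n i & p = off i + j].
Proof.
elim: M => [|M IH]; first by rewrite off0.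
case: (ltnP p (off M)) => h1 h2.
  by have [i [j [a b c]]] := IH h1; exists i, j; split => //; lia.
exists M, (p - off M); split => //; [ | lia]; move: h2; rewrite offS; lia.
Qed.

Lemma decomp p : p < rawM -> exists i j, [/\ i < m, j < n i & p = off i + j].
Proof. exact: decompM. Qed.

Lemma decomp_uniq i j i' j' : j < n i -> j' < n i' -> off i + j = off i' + j' ->
  i = i' /\ j = j'.
Proof.
move=> hj hj' h; case: (ltngtP i i') => hii.
- have := off_mono hii; rewrite offS; lia.
- have := off_mono hii; rewrite offS; lia.
- subst; split => //; lia.
Qed.

Definition cyc p := count (fun k => off k.+1 <= p) (iota 0 m).

Lemma cycE i j : i < m -> j < n i -> cyc (off i + j) = i.
Proof.
move=> hi hj; rewrite /cyc (_ : m = i + (m - i)); last lia.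
rewrite iotaD count_cat add0n.
rewrite (eq_in_count (a2 := predT)); last first.
  move=> k; rewrite mem_iota => /andP [_ hk] /=; have := off_mono hk => h; apply: leq_trans h (leq_addr _ _).
rewrite count_predT size_iota.
rewrite (eq_in_count (a2 := pred0)); last first.
  move=> k; rewrite mem_iota => /andP [hk _] /=.
  have := off_mono (_ : i.+1 <= k.+1); rewrite offS; move/(_ hk); lia.
by rewrite count_pred0 addn0.
Qed.

Lemma canon_glue i : i.+1 < m -> canon (off i.+1) = off i + (n i)./2.
Proof.
move=> hi; rewrite /Defs.canon.
have memi : i \in [seq k <- iota 0 m.-1 | off i.+1 == off k.+1].
  rewrite mem_filter eqxx mem_iota /=; lia.
case E: [seq k <- iota 0 m.-1 | off i.+1 == off k.+1] memi => [//|k s] _.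
have : k \in [seq k <- iota 0 m.-1 | off i.+1 == off k.+1] by rewrite E inE eqxx.
rewrite mem_filter mem_iota => /andP [/eqP h hk].
have h1 : 0 < n k.+1 by have := n4 (i:=k.+1) ltac:(lia); lia.
have h2 : 0 < n i.+1 by have := n4 (i:=i.+1) ltac:(lia); lia.
have [e1 _] := @decomp_uniq k.+1 0 i.+1 0 h1 h2 ltac:(by rewrite !addn0).
by case: e1 => ->.
Qed.

Lemma canon_id i j : i < m -> j < n i -> (i == 0) || (j != 0) -> canon (off i + j) = off i + j.
Proof.
move=> hi hj hij; rewrite /Defs.canon.
case E: [seq k <- iota 0 m.-1 | off i + j == off k.+1] => [//|k s].
have : k \in [seq k <- iota 0 m.-1 | off i + j == off k.+1] by rewrite E inE eqxx.
rewrite mem_filter mem_iota => /andP [/eqP h hk].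
have h0 : 0 < n k.+1 by have := n4 (i:=k.+1) ltac:(lia); lia.
have [h1 h2] := @decomp_uniq i j k.+1 0 hj h0 ltac:(by rewrite addn0).
by move: hij; rewrite h1 h2.
Qed.

Lemma canonical_char i j : i < m -> j < n i -> canon (off i + j) = off i + j ->
  (i == 0) || (j != 0).
Proof.
move=> hi hj; case: i hi hj => [//|i] hi hj /=.
case: (eqVneq j 0) => // ->; rewrite addn0 canon_glue // => h.
have := offS i; have := n4 (i:=i) ltac:(lia); lia.
Qed.

Lemma canon_ok p : p < rawM -> canon p < rawM /\ canon (canon p) = canon p.
Proof.
move=> hp; have [i [j [hi hj ->]]] := decomp hp.
have hlt : forall i j, i < m -> j < n i -> off i + j < rawM.
  move=> a b ha hb; have := off_mono (_ : a.+1 <= m); rewrite offS /Defs.rawM; move/(_ ha); lia.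
case: (boolP ((i == 0) || (j != 0))) => hij; first by rewrite canon_id //; split=> //; [exact: hlt | rewrite canon_id].
have [i' ei] : exists i', i = i'.+1 by case: i hi hj hij => // i'; exists i'.
have ej : j = 0 by lia.
subst; rewrite addn0 canon_glue //.
have hn := n4 (i:=i') ltac:(lia); split; first by apply: hlt; lia.
rewrite canon_id //; lia.
Qed.

Definition phi p := doff (cyc p) + minn (p - off (cyc p)) (n (cyc p) - (p - off (cyc p))).

Lemma phiE i j : i < m -> j < n i -> phi (off i + j) = doff i + minn j (n i - j).
Proof. by move=> hi hj; rewrite /phi cycE // addKn. Qed.

Lemma phi_canon p : p < rawM -> phi (canon p) = phi p.
Proof.
move=> hp; have [i [j [hi hj ->]]] := decomp hp.
case: (boolP ((i == 0) || (j != 0))) => hij; first by rewrite canon_id.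
have [i' ei] : exists i', i = i'.+1 by case: i hi hj hij => // i'; exists i'.
have ej : j = 0 by lia.
subst; have h1 := n4 (i:=i') ltac:(lia); have h2 := n4 (i:=i'.+1) hi.
have h3 : (n i')./2 < n i' by lia.
rewrite addn0 canon_glue ?phiE //; try lia.
rewrite -[off i'.+1]addn0 phiE //; try lia.
rewrite doffS; lia.
Qed.

Lemma modS j k : j < k -> j.+1 %% k = if j.+1 == k then 0 else j.+1.
Proof. move=> h; case: eqP => [->|ne]; [exact: modnn | apply: modn_small; lia]. Qed.

Lemma raw_adj_sym p q : raw_adj m n p q = raw_adj m n q p.
Proof. by apply: eq_existsb => i; rewrite andbCA orbC. Qed.

Lemma raw_lip p q : raw_adj m n p q -> phi p <= (phi q).+1.
Proof.
case/existsP => i /and3P [/andP [h1 h2] /andP [h3 h4] h5].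
have hi := ltn_ord i; have hn := n4 hi; have hev := nev hi.
have ep : p = off i + (p - off i) by lia.
have eq' : q = off i + (q - off i) by lia.
rewrite ep eq' !phiE //; try lia.
move: h5; rewrite !modS; try lia.
have ha : p - off i < n i by lia.
have hb : q - off i < n i by lia.
move: (p - off i) (q - off i) ha hb => a b ha hb.
case: (eqVneq a.+1 (n i)) => ea; case: (eqVneq b.+1 (n i)) => eb /=; lia.
Qed.

Notation T := (chain_vertex m n).
Notation adj := (@chain_adj m n).
Definition r (u : T) : nat := val (val u).
Lemma r_lt u : r u < rawM. Proof. exact: ltn_ord. Qed.
Lemma r_canon u : canon (r u) = r u. Proof. by apply/eqP; case: u. Qed.
Lemma r_inj u v : r u = r v -> u = v. Proof. by move=> h; apply: val_inj; apply: val_inj. Qed.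

Definition mkv (q : 'I_rawM) : T :=
  exist _ (Ordinal (proj1 (canon_ok (ltn_ord q)))) (introT eqP (proj2 (canon_ok (ltn_ord q)))).
Lemma r_mkv q : r (mkv q) = canon q. Proof. by []. Qed.

Lemma chain_adj_sym u v : adj u v = adj v u.
Proof.
apply/existsP/existsP => [[p /existsP [q /and3P [a b c]]]|[p /existsP [q /and3P [a b c]]]];
 exists q; apply/existsP; exists p; by rewrite a b raw_adj_sym c.
Qed.

Lemma chain_lip u v : adj u v -> phi (r u) <= (phi (r v)).+1.
Proof.
case/existsP => p /existsP [q /and3P [/eqP a /eqP b c]].
by rewrite /r -a -b !phi_canon //; apply: raw_lip.
Qed.


Lemma hraw0 : 0 < rawM. Proof. have := rawM_ge; have := n4 (i:=0) ltac:(lia); lia. Qed.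

Lemma canon_small j : j < n 0 -> canon j = j.
Proof. move=> hj; have := @canon_id 0 j ltac:(lia) hj; rewrite off0 add0n; apply; by []. Qed.

Definition vtx j (hj : j < n 0) : T := mkv (Ordinal (leq_trans hj rawM_ge)).
Lemma r_vtx j hj : r (@vtx j hj) = j. Proof. by rewrite r_mkv /= canon_small. Qed.

Definition x0 : T := mkv (Ordinal hraw0).
Lemma r_x0 : r x0 = 0. Proof. rewrite r_mkv /= canon_small //; have := n4 (i:=0) ltac:(lia); lia. Qed.

Lemma off_ltM i : i < m -> off i.+1 <= rawM.
Proof. move=> hi; exact: off_mono. Qed.

Lemma phi_zero v : (phi (r v) == 0) = (v == x0).
Proof.
apply/eqP/eqP => [h|->].
  2: { have h := @phiE 0 0 ltac:(lia) ltac:(have := n4 (i:=0) ltac:(lia); lia).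
       by move: h; rewrite off0 r_x0 => ->; rewrite min0n. }
apply: r_inj; rewrite r_x0; move: h.
have [i [j [hi hj ev]]] := decomp (r_lt v); rewrite ev phiE //.
case: i hi hj ev => [|i] hi hj ev.
  rewrite off0 /doff /= add0n => h; lia.
have := doff_mono (_ : 1 <= i.+1); rewrite doffS /doff /= => /(_ isT).
have := n4 (i:=0) ltac:(lia); lia.
Qed.

Lemma adj_raw (u v : T) (p q : 'I_rawM) : canon p = r u -> canon q = r v -> raw_adj m n p q -> adj u v.
Proof.
move=> hp hq hpq; apply/existsP; exists p; apply/existsP; exists q.
by rewrite hp hq !eqxx.
Qed.

Lemma raw_adj_in i j j' : i < m -> j < n i -> j' < n i ->
  ((j.+1 %% n i == j') || (j'.+1 %% n i == j)) -> raw_adj m n (off i + j) (off i + j').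
Proof.
move=> hi hj hj' h; apply/existsP; exists (Ordinal hi) => /=.
by rewrite !addKn h !leq_addr !ltn_add2l hj hj'.
Qed.

Lemma descent v : 0 < phi (r v) -> exists u, adj v u /\ (phi (r u)).+1 = phi (r v).
Proof.
move=> hpos; have [i [j [hi hj ev]]] := decomp (r_lt v).
have hc := r_canon v; rewrite ev in hc; have := canonical_char hi hj hc => hij.
have hn := n4 hi; have hev := nev hi.
move: hpos; rewrite ev phiE // => hpos.
have hj0 : 0 < j.
  rewrite lt0n; apply/negP => /eqP j0; move: hij => /orP [/eqP i0|]; last by rewrite j0.
  by move: hpos; rewrite i0 j0 /doff /= min0n.
have hoff := off_ltM hi.
case: (leqP j.*2 (n i)) => hcase.
- have hq : off i + j.-1 < rawM by rewrite offS in hoff; lia.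
  exists (mkv (Ordinal hq)); split.
    apply: (adj_raw (p := Ordinal (r_lt v))) => //=; first by rewrite ev.
    rewrite ev; apply: raw_adj_in => //; try lia.
    apply/orP; right; rewrite prednK // modn_small //.
  rewrite r_mkv /= phi_canon // phiE //; try lia.
- have hq : off i + (j.+1 %% n i) < rawM.
    rewrite offS in hoff; have := ltn_pmod j.+1 (_ : 0 < n i); lia.
  exists (mkv (Ordinal hq)); split.
    apply: (adj_raw (p := Ordinal (r_lt v))) => //=; first by rewrite ev.
    rewrite ev; apply: raw_adj_in => //; first by apply: ltn_pmod; lia.
    by rewrite eqxx.
  rewrite r_mkv /= phi_canon // phiE //; last by apply: ltn_pmod; lia.
  rewrite modS //; case: eqP => e1; lia.
Qed.

Lemma gdist_x0 v : gdist adj v x0 = phi (r v).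
Proof.
apply: (@gdist_phi _ _ x0 (fun v => phi (r v))) => //.
- exact: phi_zero.
- exact: chain_lip.
- exact: descent.
Qed.


Definition cls p := if p == 0 then 0
  else if (0 < p - off (cyc p)) && ((p - off (cyc p)).*2 < n (cyc p)) then 1 else 2.

Lemma cls_lt p : cls p < 3. Proof. rewrite /cls; case: ifP => //; case: ifP => //. Qed.

Definition fcl : {ffun T -> 'I_3} := [ffun v => inord (cls (r v))].
Lemma fcl_val v : nat_of_ord (fcl v) = cls (r v). Proof. by rewrite ffunE inordK // cls_lt. Qed.

Lemma cls0 p : (cls p == 0) = (p == 0).
Proof. rewrite /cls; case: ifP => //; case: ifP => //. Qed.

Lemma phi_sep v w : v != w -> cls (r v) = cls (r w) -> phi (r v) != phi (r w).
Proof.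
move=> vw hcl; apply/negP => /eqP hph; move/negP: vw; apply; apply/eqP; apply: r_inj.
case: (eqVneq (r v) 0) => hv0.
  by move: hcl; rewrite hv0 /= => /esym/eqP; rewrite cls0 => /eqP ->.
have [i [j [hi hj ev]]] := decomp (r_lt v).
have [i' [j' [hi' hj' ew]]] := decomp (r_lt w).
have hcv := r_canon v; rewrite ev in hcv; have := canonical_char hi hj hcv => hij.
have hcw := r_canon w; rewrite ew in hcw; have := canonical_char hi' hj' hcw => hij'.
have hw0 : r w != 0.
  by apply/negP => /eqP h0; move: hcl; rewrite h0 => /eqP; rewrite cls0 (negbTE hv0).
have hj0 : 0 < j.
  rewrite lt0n; apply/negP => /eqP j0; move: hij => /orP [/eqP i0|]; last by rewrite j0.
  by move: hv0; rewrite ev i0 j0.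
have hj0' : 0 < j'.
  rewrite lt0n; apply/negP => /eqP j0; move: hij' => /orP [/eqP i0|]; last by rewrite j0.
  by move: hw0; rewrite ew i0 j0.
have hv0' : (off i + j == 0) = false by rewrite -ev (negbTE hv0).
have hw0' : (off i' + j' == 0) = false by rewrite -ew (negbTE hw0).
move: hcl hph; rewrite /cls ev ew hv0' hw0' !cycE // !addKn !phiE //.
have hn := n4 hi; have hn' := n4 hi'; have he := nev hi; have he' := nev hi'.
have sep : forall a b c d, a < c -> c < m -> 0 < b < n a -> 0 < d < n c ->
    doff a + minn b (n a - b) < doff c + minn d (n c - d).
  move=> a b c d ac cm hb hd; have := doff_mono ac; rewrite doffS.
  have := nev (i:=a) ltac:(lia); lia.
case: (ltngtP i i') => hii.
- move=> _ h; have := sep i j i' j' hii hi' ltac:(lia) ltac:(lia); lia.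
- move=> _ h; have := sep i' j' i j hii hi ltac:(lia) ltac:(lia); lia.
- subst i'; move=> h1 h2; have : j = j'.
    move: h1; case: ifP; case: ifP; move=> /andP ? /andP ? ? ; lia.
  by move=> ->.
Qed.


Lemma fcl0 q : (fcl q == ord0) = (q == x0).
Proof.
apply/eqP/eqP => [h|->].
  apply: r_inj; rewrite r_x0; have := fcl_val q; rewrite h /= => /esym /eqP.
  by rewrite cls0 => /eqP.
by apply: ord_inj; rewrite fcl_val r_x0.
Qed.

Lemma dc_x0 v : dist_class adj fcl ord0 v = gdist adj v x0.
Proof.
have h1 : dist_class adj fcl ord0 v <= gdist adj v x0 by apply: dc_le; apply/eqP; rewrite fcl0.
apply/eqP; rewrite eqn_leq h1 /=.
case: (dc_cases adj fcl ord0 v) => [->|[q /eqP hq ->]]; first exact: gdist_le.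
by move: hq; rewrite fcl0 => /eqP ->.
Qed.

Lemma hn0 : 4 <= n 0. Proof. apply: n4; lia. Qed.

Lemma fcl_res : resolving_partition adj fcl.
Proof.
apply/andP; split.
  apply/forallP => j; apply/existsP.
  have h0 := hn0.
  case: j => [[|[|[|j]]] hj] //.
  - exists x0; apply/eqP; apply: ord_inj; by rewrite fcl_val r_x0.
  - have h1 : 1 < n 0 by lia.
    exists (vtx h1); apply/eqP; apply: ord_inj; rewrite fcl_val r_vtx /= /cls /=.
    have c1 : cyc 1 = 0 by apply: (@cycE 0 1); lia.
    rewrite c1 off0 subn0; case: ifP => //; lia.
  - have h1 : (n 0)./2 < n 0 by lia.
    exists (vtx h1); apply/eqP; apply: ord_inj; rewrite fcl_val r_vtx /= /cls /=.
    have c1 : cyc (n 0)./2 = 0 by apply: (@cycE 0 (n 0)./2); lia.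
    rewrite c1 off0 subn0; case: ifP; first lia.
    move=> _; have := nev (i:=0) ltac:(lia); case: ifP => //; lia.
apply/forallP => u; apply/forallP => v; apply/implyP => uv; apply/existsP.
case: (eqVneq (fcl u) (fcl v)) => hf.
  exists ord0; rewrite !dc_x0 !gdist_x0; apply: phi_sep => //.
  by rewrite -!fcl_val hf.
exists (fcl u); have := dc0 adj fcl (fcl u) u; rewrite eqxx => /eqP ->.
by rewrite eq_sym dc0 eq_sym.
Qed.


Lemma neq_r u v : r u != r v -> u != v.
Proof. by apply: contra => /eqP ->. Qed.

Lemma adj_of (u v : T) i j j' : i < m -> j < n i -> j' < n i ->
  canon (off i + j) = r u -> canon (off i + j') = r v ->
  (j.+1 %% n i == j') || (j'.+1 %% n i == j) -> adj u v.
Proof.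
move=> hi hj hj' hu hv h.
have := off_ltM hi; rewrite offS => ho.
have hp : off i + j < rawM by lia.
have hq : off i + j' < rawM by lia.
apply: (@adj_raw u v (Ordinal hp) (Ordinal hq)) => //=; exact: raw_adj_in.
Qed.

Lemma off1 : off 1 = n 0. Proof. by rewrite offS off0. Qed.

Lemma off2M : n 0 + n 1 <= rawM.
Proof. have := off_mono (_ : 2 <= m); rewrite !offS off0 add0n; apply; lia. Qed.

Lemma main : pdim adj = 3.
Proof.
have h0 := hn0; have h1 := n4 (i:=1) ltac:(lia); have ev0 := nev (i:=0) ltac:(lia).
have M2 := off2M.
have hw : (n 0)./2 < n 0 by lia.
have ha : (n 0)./2 - 1 < n 0 by lia.
have hb : (n 0)./2 + 1 < n 0 by lia.
have hc : n 0 + 1 < rawM by lia.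
have hd : n 0 + (n 1 - 1) < rawM by lia.
pose w := vtx hw; pose a := vtx ha; pose b := vtx hb.
pose c := mkv (Ordinal hc); pose d := mkv (Ordinal hd).
have rc : r c = n 0 + 1.
  rewrite r_mkv /= -off1 canon_id //; lia.
have rd : r d = n 0 + (n 1 - 1).
  rewrite r_mkv /= -off1 canon_id //; lia.
have cw : canon (off 1 + 0) = r w by rewrite addn0 canon_glue // off0 add0n r_vtx.
have c0 : forall j (hj : j < n 0), canon (off 0 + j) = r (vtx hj).
  by move=> j hj; rewrite off0 add0n r_vtx canon_small.
have adjs : forall x, x \in [:: a; b; c; d] -> [/\ adj w x, adj x w & x != w].
  move=> x; rewrite !inE => /or4P [] /eqP ->.
  - have e : adj w a.
      apply: (@adj_of w a 0 (n 0)./2 ((n 0)./2 - 1)) => //.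
      all: try lia; try exact: c0. apply/orP; right; rewrite modn_small; lia.
    split; [exact: e | by rewrite chain_adj_sym | apply: neq_r]; rewrite !r_vtx; lia.
  - have e : adj w b.
      apply: (@adj_of w b 0 (n 0)./2 ((n 0)./2 + 1)) => //.
      all: try lia; try exact: c0. apply/orP; left; rewrite modn_small; lia.
    split; [exact: e | by rewrite chain_adj_sym | apply: neq_r]; rewrite !r_vtx; lia.
  - have e : adj w c.
      apply: (@adj_of w c 1 0 1) => //; try lia.
      by rewrite off1 rc.
      rewrite modn_small; lia.
    split; [exact: e | by rewrite chain_adj_sym | apply: neq_r]; rewrite rc !r_vtx; lia.
  - have e : adj w d.
      apply: (@adj_of w d 1 0 (n 1 - 1)) => //; try lia.
      by rewrite off1 rd.
      apply/orP; right; rewrite subn1 prednK; last lia. by rewrite modnn.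
    split; [exact: e | by rewrite chain_adj_sym | apply: neq_r]; rewrite rd !r_vtx; lia.
have uq : uniq [:: a; b; c; d].
  apply: (@map_uniq _ _ r); rewrite /= rc rd !r_vtx !inE; lia.
have wa : w != a by apply: neq_r; rewrite !r_vtx; lia.
rewrite /pdim; apply: find_iota_eq.
  rewrite ltnS cardT; apply: (leq_trans _ (uniq_leq_size uq _)) => // x _; by rewrite mem_enum.
  by apply/existsP; exists fcl; exact: fcl_res.
case=> [|[|[|l]]] // _.
- by apply/existsP => [[f _]]; exact: no_res0 x0 f.
- apply/existsP => [[f hf]]; have := no_res1 adj f wa; by rewrite hf.
- apply/existsP => [[f hf]]; have := no_res2 f adjs uq; by rewrite hf.
Qed.

End C.

Unset Implicit Arguments.

Theorem theorem2p3 (m : nat) (n : nat -> nat) :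
  2 <= m ->
  (forall i, i < m -> 4 <= n i /\ ~~ odd (n i)) ->
  pdim (@chain_adj m n) = 3.
Proof. move=> Hm Hn; exact: main. Qed.
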